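(* Let $\beta=(\beta_1,\ldots,\beta_\ell)$ be a composition of $N$ and $\mathcal{P}$ a subposet of the total order $1<\cdots<\ell$. The following are equivalent: (P1) $\mathcal{P}$ is a normal subposet of $1<\cdots<\ell$ (i.e. $(\beta,\mathcal{P})$ is a unipotent polytope); (P2) $\mathrm{fat}_\beta(\mathcal{P})$ is a normal (and Levi compatible) subposet of $\mathcal{Q}_\beta$; (P3) $P_\beta\subseteq N_{\mathrm{GL}_N}(\mathrm{UT}_{(\beta,\mathcal{P})})$.
   Context: Fix a prime power $q$; $\mathrm{GL}_N=\mathrm{GL}_N(\mathbb{F}_q)$. A subposet of a poset $(X,\prec_{\mathcal{R}})$ is a strict partial order $\prec_{\mathcal{P}}$ on the same set with $a\prec_{\mathcal{P}}b\Rightarrow a\prec_{\mathcal{R}}b$; it is normal if $j\prec_{\mathcal{P}}k$ implies $i\prec_{\mathcal{P}}k$ and $j\prec_{\mathcal{P}}l$ for all $i\prec_{\mathcal{R}}j$, $k\prec_{\mathcal{R}}l$. For a subposet $\mathcal{R}$ of $1<\cdots<N$, $\mathfrak{ut}_{\mathcal{R}}=\{x\in M_N(\mathbb{F}_q)\mid x_{ab}\neq0\Rightarrow a\prec_{\mathcal{R}}b\}$, $\mathrm{UT}_{\mathcal{R}}=\mathrm{Id}_N+\mathfrak{ut}_{\mathcal{R}}$. For a composition $\beta$ of $N$ with $\ell$ parts, $\mathcal{Q}_i=\{\beta_1+\cdots+\beta_{i-1}+1,\ldots,\beta_1+\cdots+\beta_i\}$; $\mathcal{Q}_\beta$ is the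 poset on $\{1,\ldots,N\}$ with $a\prec b$ iff $a\in\mathcal{Q}_i,b\in\mathcal{Q}_j,i<j$; $\mathrm{UT}_\beta=\mathrm{UT}_{\mathcal{Q}_\beta}$; $L_\beta$ is the block-diagonal subgroup $\mathrm{GL}_{\beta_1}\times\cdots\times\mathrm{GL}_{\beta_\ell}$ (blocks indexed by the $\mathcal{Q}_i$); $P_\beta=L_\beta\ltimes\mathrm{UT}_\beta$ (invertible block upper triangular matrices). A subposet $\mathcal{R}$ of $\mathcal{Q}_\beta$ is Levi compatible if $L_\beta\subseteq N_{\mathrm{GL}_N}(\mathrm{UT}_{\mathcal{R}})$. For a subposet $\mathcal{P}$ of $1<\cdots<\ell$, $\mathrm{fat}_\beta(\mathcal{P})$ is the poset on $\{1,\ldots,N\}$ with $a\prec b$ iff $a\in\mathcal{Q}_i,b\in\mathcal{Q}_j$ with $i\prec_{\mathcal{P}}j$, and $\mathrm{UT}_{(\beta,\mathcal{P})}=\mathrm{UT}_{\mathrm{fat}_\beta(\mathcal{P})}$. *)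

(* Defs.v *)
From HB Require Import structures.
From mathcomp Require Import all_boot all_order all_algebra all_fingroup.
Unset Printing Implicit Defensive.
Import GRing.Theory.
Local Open Scope ring_scope.

(* Indices are 0-based: {1,...,N} is 'I_N, {1,...,l} is 'I_l. *)

Definition is_subposet (T : Type) (R P : rel T) : Prop :=
  [/\ irreflexive P, transitive P & forall a b, P a b -> R a b].
Arguments is_subposet {T} R P.

Definition normal_subposet (T : Type) (R P : rel T) : Prop :=
  forall i j k l, P j k -> (R i j -> P i k) /\ (R k l -> P j l).
Arguments normal_subposet {T} R P.

Definition total_order (n : nat) : rel 'I_n := fun a b => (a < b)%N.

Definition blockQ (l N : nat) (beta : 'I_l -> nat) (i : 'I_l) : {set 'I_N} :=
  [set a : 'I_N | (\sum_(j < l | (j < i)%N) beta j <= a)%N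
                  && (a < \sum_(j < l | (j <= i)%N) beta j)%N].
Arguments blockQ {l} N beta i.

Definition is_composition (l N : nat) (beta : 'I_l -> nat) : Prop :=
  (forall i, 0 < beta i)%N /\ (\sum_(i < l) beta i)%N = N.
Arguments is_composition {l} N beta.

Definition fat (l N : nat) (beta : 'I_l -> nat) (P : rel 'I_l) : rel 'I_N :=
  fun a b => [exists i : 'I_l, exists j : 'I_l,
               [&& a \in blockQ N beta i, b \in blockQ N beta j & P i j]].
Arguments fat {l} N beta P.

Definition Qbeta (l N : nat) (beta : 'I_l -> nat) : rel 'I_N :=
  fat N beta (@total_order l).
Arguments Qbeta {l} N beta.


Definition ut (F : finFieldType) (N : nat) (R : rel 'I_N) : {set 'M[F]_N} :=
  [set x : 'M[F]_N | [forall a, forall b, (x a b != 0) ==> R a b]].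
Arguments ut F {N} R.
Definition UT (F : finFieldType) (N : nat) (R : rel 'I_N) : {set 'M[F]_N} :=
  [set 1%:M + x | x in ut F R].
Arguments UT F {N} R.

Definition normGL (F : finFieldType) (N : nat) (S : {set 'M[F]_N}) : {set 'M[F]_N} :=
  [set g : 'M[F]_N | (g \in unitmx) && ([set invmx g *m h *m g | h in S] == S)].
Arguments normGL F {N} S.

Definition Levi (F : finFieldType) (l N : nat) (beta : 'I_l -> nat) : {set 'M[F]_N} :=
  [set g : 'M[F]_N | (g \in unitmx) &&
     [forall a, forall b, (g a b != 0) ==>
        [exists i : 'I_l, (a \in blockQ N beta i) && (b \in blockQ N beta i)]]].
Arguments Levi F {l} N beta.

Definition Parabolic (F : finFieldType) (l N : nat) (beta : 'I_l -> nat) : {set 'M[F]_N} :=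
  [set g : 'M[F]_N | (g \in unitmx) &&
     [forall a, forall b, (g a b != 0) ==>
        [exists i : 'I_l, exists j : 'I_l,
           [&& a \in blockQ N beta i, b \in blockQ N beta j & (i <= j)%N]]]].
Arguments Parabolic F {l} N beta.

Definition levi_compatible (F : finFieldType) (l N : nat) (beta : 'I_l -> nat) (R : rel 'I_N) : Prop :=
  Levi F N beta \subset normGL F (UT F R).
Arguments levi_compatible F {l} N beta R.

(* Main.v *)
Require Import Defs.
From HB Require Import structures.
From mathcomp Require Import all_boot all_order all_algebra all_fingroup.
From mathcomp Require Import zify.
Import GRing.Theory.

Definition pre (l : nat) (beta : 'I_l -> nat) (m : nat) : nat :=
  \sum_(j < l | (j < m)%N) beta j.
Arguments pre {l}.

Lemma pre_mono (l : nat) (beta : 'I_l -> nat) (m n : nat) : (m <= n)%N -> (pre beta m <= pre beta n)%N.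
Proof.
move=> mn; rewrite /pre [X in (X <= _)%N]big_mkcond [X in (_ <= X)%N]big_mkcond.
apply: leq_sum => j _; case: ifP => // jm.
by rewrite (leq_trans jm mn).
Qed.

Lemma pre_S (l : nat) (beta : 'I_l -> nat) (i : 'I_l) : pre beta i.+1 = (pre beta i + beta i)%N.
Proof.
rewrite /pre (bigD1 i) //= addnC; congr (_ + _)%N.
apply: eq_bigl => j; case: (eqVneq j i) => [->|ne]; first by rewrite ltnn andbF.
by rewrite ltnS andbT ltn_neqAle ne.
Qed.

Lemma pre_l (l : nat) (beta : 'I_l -> nat) : pre beta l = (\sum_(i < l) beta i)%N.
Proof. by apply: eq_bigl => j; rewrite ltn_ord. Qed.

Lemma blockQE (l N : nat) (beta : 'I_l -> nat) (i : 'I_l) (a : 'I_N) :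
  (a \in blockQ N beta i) = (pre beta i <= a)%N && (a < pre beta i.+1)%N.
Proof. by rewrite inE. Qed.

Lemma block_uniq (l N : nat) (beta : 'I_l -> nat) (i j : 'I_l) (a : 'I_N) :
  a \in blockQ N beta i -> a \in blockQ N beta j -> i = j.
Proof.
rewrite !blockQE => /andP[h1 h2] /andP[h3 h4].
apply: val_inj => /=; case: (ltngtP i j) => // ij.
- have := @pre_mono _ beta _ _ ij. lia.
- have := @pre_mono _ beta _ _ ij. lia.
Qed.

Arguments block_uniq {l N beta i j a}.

Lemma block_ex (l N : nat) (beta : 'I_l -> nat) : is_composition N beta ->
  forall a : 'I_N, exists i : 'I_l, a \in blockQ N beta i.
Proof.
move=> [_ hN] a.
suff: forall m, (m <= l)%N -> (a < pre beta m)%N ->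
  exists i : 'I_l, a \in blockQ N beta i.
  by move=> H; apply: (H l (leqnn l)); rewrite pre_l hN.
elim=> [|m IH] ml h; first by rewrite /pre big_pred0 in h.
case: (ltnP a (pre beta m)) => h'.
  by apply: IH => //; apply: ltnW.
exists (Ordinal ml); by rewrite blockQE h' h.
Qed.

Lemma block_ne (l N : nat) (beta : 'I_l -> nat) : is_composition N beta ->
  forall i : 'I_l, exists a : 'I_N, a \in blockQ N beta i.
Proof.
move=> [hpos hN] i.
have h1 : (pre beta i < pre beta i.+1)%N by rewrite pre_S -addn1 leq_add2l hpos.
have h2 : (pre beta i.+1 <= N)%N by rewrite -hN -pre_l pre_mono.
exists (Ordinal (leq_trans h1 h2)); by rewrite blockQE /= leqnn h1.
Qed.

Lemma fatE (l N : nat) (beta : 'I_l -> nat) (P : rel 'I_l) (i j : 'I_l) (a b : 'I_N) :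
  a \in blockQ N beta i -> b \in blockQ N beta j -> fat N beta P a b = P i j.
Proof.
move=> ha hb; apply/existsP/idP.
  case=> i' /existsP[j' /and3P[ha' hb' hP]].
  by rewrite (block_uniq ha ha') (block_uniq hb hb').
by move=> hP; exists i; apply/existsP; exists j; rewrite ha hb hP.
Qed.
Arguments block_ex {l N beta}.
Arguments block_ne {l N beta}.
Arguments fatE {l N beta} P {i j a b}.
Lemma fat_subposet (l N : nat) (beta : 'I_l -> nat) (P : rel 'I_l) :
  is_composition N beta -> is_subposet (total_order l) P ->
  is_subposet (Qbeta N beta) (fat N beta P).
Proof.
move=> hc [irr tr sub]; split.
- move=> a; have [i ha] := block_ex hc a; by rewrite (fatE _ ha ha) irr.
- move=> b a c; have [i ha] := block_ex hc a; have [j hb] := block_ex hc b.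
  have [k hcc] := block_ex hc c.
  rewrite (fatE _ ha hb) (fatE _ hb hcc) (fatE _ ha hcc); exact: tr.
- move=> a b; have [i ha] := block_ex hc a; have [j hb] := block_ex hc b.
  rewrite /Qbeta (fatE _ ha hb) (fatE _ ha hb); exact: sub.
Qed.

Lemma fat_normal (l N : nat) (beta : 'I_l -> nat) (P : rel 'I_l) :
  is_composition N beta ->
  normal_subposet (total_order l) P <-> normal_subposet (Qbeta N beta) (fat N beta P).
Proof.
move=> hc; split.
- move=> hn a b c d.
  have [i ha] := block_ex hc a; have [j hb] := block_ex hc b.
  have [k hcc] := block_ex hc c; have [m hd] := block_ex hc d.
  rewrite /Qbeta (fatE _ hb hcc) (fatE _ ha hb) (fatE _ ha hcc) (fatE _ hcc hd)
    (fatE _ hb hd).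
  exact: hn.
- move=> hn i j k m.
  have [a ha] := block_ne hc i; have [b hb] := block_ne hc j.
  have [c hcc] := block_ne hc k; have [d hd] := block_ne hc m.
  have := hn a b c d.
  rewrite /Qbeta (fatE _ hb hcc) (fatE _ ha hb) (fatE _ ha hcc) (fatE _ hcc hd)
    (fatE _ hb hd).
  done.
Qed.
Local Open Scope ring_scope.

Definition supp (F : finFieldType) (N : nat) (R : rel 'I_N) (g : 'M[F]_N) : bool :=
  [forall a, forall b, (g a b != 0) ==> R a b].
Arguments supp {F N}.

Lemma suppP (F : finFieldType) (N : nat) (R : rel 'I_N) (g : 'M[F]_N) :
  reflect (forall a b, g a b != 0 -> R a b) (supp R g).
Proof.
apply: (iffP forallP) => [H a b|H a]; first by move/forallP: (H a) => /(_ b)/implyP.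
by apply/forallP => b; apply/implyP; apply: H.
Qed.

Lemma supp_mul (F : finFieldType) (N : nat) (R1 R2 R3 : rel 'I_N) (A B : 'M[F]_N) :
  (forall a c b, R1 a c -> R2 c b -> R3 a b) ->
  supp R1 A -> supp R2 B -> supp R3 (A *m B).
Proof.
move=> htr /suppP hA /suppP hB; apply/suppP => a b.
case: (boolP [exists c, (A a c != 0) && (B c b != 0)]) => [/existsP[c /andP[h1 h2]]| /existsPn H].
  by move=> _; apply: (htr a c b); [apply: hA | apply: hB].
rewrite mxE big1 ?eqxx // => c _; have := H c; rewrite negb_and !negbK.
by case/orP=> /eqP->; rewrite ?mul0r ?mulr0.
Qed.

Arguments supp_mul {F N R1 R2 R3 A B}.

Lemma supp1 (F : finFieldType) (N : nat) (R : rel 'I_N) :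
  reflexive R -> supp R (1%:M : 'M[F]_N).
Proof.
move=> hr; apply/suppP => a b; rewrite mxE; case: (eqVneq a b) => [->|]; first by rewrite hr.
by rewrite eqxx.
Qed.

Lemma supp_inv (F : finFieldType) (N : nat) (R : rel 'I_N) (g : 'M[F]_N) :
  reflexive R -> transitive R -> g \in unitmx -> supp R g -> supp R (invmx g).
Proof.
move=> hr ht gu hg.
pose S := [set h : 'M[F]_N | supp R h].
have inj : injective (fun h : 'M[F]_N => g *m h) by apply: can_inj (mulKmx gu).
have sub : [set g *m h | h in S] \subset S.
  apply/subsetP => _ /imsetP[h hS ->]; rewrite inE; rewrite inE in hS.
  apply: (@supp_mul F N R R R g h _ hg hS) => a c b; exact: ht.
have eqS : [set g *m h | h in S] = S.
  apply/eqP; rewrite eqEcard sub /=; rewrite (@card_imset _ _ (mulmx g) S inj) //.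
have : (1%:M : 'M[F]_N) \in S by rewrite inE supp1.
rewrite -eqS => /imsetP[h hS e].
have -> : invmx g = h by rewrite -[h](mulKmx gu) -e mulmx1.
by rewrite inE in hS.
Qed.
Lemma conjUT (F : finFieldType) (N : nat) (g x : 'M[F]_N) : g \in unitmx ->
  invmx g *m (1%:M + x) *m g = 1%:M + invmx g *m x *m g.
Proof. by move=> gu; rewrite mulmxDr mulmx1 mulmxDl mulVmx. Qed.

Lemma normGL_of (F : finFieldType) (N : nat) (R : rel 'I_N) (g : 'M[F]_N) :
  g \in unitmx -> (forall x, supp R x -> supp R (invmx g *m x *m g)) ->
  g \in normGL F (UT F R).
Proof.
move=> gu H; rewrite inE gu /=.
have inj : injective (fun h : 'M[F]_N => invmx g *m h *m g).
  move=> h1 h2 e; have := congr1 (fun m => g *m m *m invmx g) e => /=.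
  by rewrite !mulmxA mulmxV // !mul1mx -!mulmxA mulmxV // !mulmx1.
rewrite eqEcard (@card_imset _ _ (fun h : 'M[F]_N => invmx g *m h *m g) _ inj) leqnn andbT.
apply/subsetP => _ /imsetP[h /imsetP[x hx ->] ->].
rewrite conjUT //; apply/imsetP; exists (invmx g *m x *m g) => //.
rewrite inE in hx; rewrite inE; exact: H.
Qed.

Definition blkle (l N : nat) (beta : 'I_l -> nat) : rel 'I_N :=
  fat N beta (fun i j : 'I_l => (i <= j)%N).
Arguments blkle {l}.

Lemma Parabolic_mem (F : finFieldType) (l N : nat) (beta : 'I_l -> nat) (g : 'M[F]_N) :
  g \in Parabolic F N beta -> g \in unitmx /\ supp (blkle N beta) g.
Proof. by rewrite inE => /andP[]. Qed.

Lemma normal_parabolic (F : finFieldType) (l N : nat) (beta : 'I_l -> nat) (P : rel 'I_l) :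
  is_composition N beta -> normal_subposet (total_order l) P ->
  Parabolic F N beta \subset normGL F (UT F (fat N beta P)).
Proof.
move=> hc hn; apply/subsetP => g /Parabolic_mem[gu hg].
have refl : reflexive (blkle N beta).
  by move=> a; have [i ha] := block_ex hc a; rewrite /blkle (fatE _ ha ha).
have trans : transitive (blkle N beta).
  move=> b a c; have [i ha] := block_ex hc a; have [j hb] := block_ex hc b.
  have [k hcc] := block_ex hc c.
  rewrite /blkle (fatE _ ha hb) (fatE _ hb hcc) (fatE _ ha hcc); exact: leq_trans.
have hig := @supp_inv F N _ g refl trans gu hg.
apply: normGL_of => // x hx.
apply: (supp_mul (R1 := fat N beta P) _ (supp_mul (R3 := fat N beta P) _ hig hx) hg).
- move=> a d b; have [i ha] := block_ex hc a; have [j hd] := block_ex hc d.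
  have [k hb] := block_ex hc b.
  rewrite /blkle (fatE _ ha hd) (fatE _ hd hb) (fatE _ ha hb) => hij hjk.
  case: (ltnP j k) hjk => [jk _|kj jk].
    by have [_ H] := hn i i j k hij; apply: H.
  have e : j = k by apply/val_inj/eqP; rewrite eqn_leq jk kj.
  by rewrite -e.
- move=> a c d; have [i ha] := block_ex hc a; have [j hcc] := block_ex hc c.
  have [k hd] := block_ex hc d.
  rewrite /blkle (fatE _ ha hcc) (fatE _ hcc hd) (fatE _ ha hd) => hij hjk.
  case: (ltnP i j) hij => [ij _|ji ij].
    by have [H _] := hn i j k k hjk; apply: H.
  have e : i = j by apply/val_inj/eqP; rewrite eqn_leq ij ji.
  by rewrite e.
Qed.
Lemma elem_unit (F : finFieldType) (N : nat) (a c : 'I_N) : a != c ->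
  (1%:M + delta_mx a c : 'M[F]_N) \in unitmx /\
  invmx (1%:M + delta_mx a c : 'M[F]_N) = 1%:M - delta_mx a c.
Proof.
move=> ne.
have h : (1%:M + delta_mx a c : 'M[F]_N) *m (1%:M - delta_mx a c) = 1%:M.
  rewrite mulmxDl mul1mx mulmxBr mulmx1 mul_delta_mx_cond eq_sym (negbTE ne) mulr0n.
  by rewrite subr0 subrK.
have [u _] := mulmx1_unit h; split => //.
by rewrite -[RHS](mulKmx u) h mulmx1.
Qed.

Lemma normGL_supp (F : finFieldType) (N : nat) (R : rel 'I_N) (g x : 'M[F]_N) :
  g \in normGL F (UT F R) -> supp R x -> supp R (invmx g *m x *m g).
Proof.
rewrite inE => /andP[gu /eqP e] hx.
have : invmx g *m (1%:M + x) *m g \in UT F R.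
  by rewrite -e; apply: imset_f; apply: imset_f; rewrite inE.
rewrite conjUT // => /imsetP[y hy /addrI ->].
by rewrite inE in hy.
Qed.

Lemma supp_delta (F : finFieldType) (N : nat) (R : rel 'I_N) (c d : 'I_N) :
  R c d -> supp R (delta_mx c d : 'M[F]_N).
Proof.
move=> h; apply/suppP => a b; rewrite mxE.
by case: (eqVneq a c) => [->|]; case: (eqVneq b d) => [->|] //=; rewrite eqxx.
Qed.

Lemma elem_parabolic (F : finFieldType) (l N : nat) (beta : 'I_l -> nat)
  (i j : 'I_l) (a c : 'I_N) :
  is_composition N beta -> a \in blockQ N beta i -> c \in blockQ N beta j ->
  (i < j)%N -> (1%:M + delta_mx a c : 'M[F]_N) \in Parabolic F N beta.
Proof.
move=> hc ha hcc ij.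
have ne : a != c.
  by apply/eqP => e; rewrite e in ha; move: ij; rewrite (block_uniq ha hcc) ltnn.
have [u _] := @elem_unit F N a c ne.
rewrite inE u /=; apply/(@suppP F N (blkle N beta)) => a' b'.
rewrite !mxE.
case: (eqVneq a' b') => [->|nab].
  by have [k hk] := block_ex hc b'; rewrite /blkle (fatE _ hk hk).
case: (eqVneq a' a) => [->|]; case: (eqVneq b' c) => [->|] //=; rewrite ?addr0 ?eqxx //.
by rewrite /blkle (fatE _ ha hcc) ltnW.
Qed.
Lemma blk_neq (l N : nat) (beta : 'I_l -> nat) (i j : 'I_l) (a b : 'I_N) :
  a \in blockQ N beta i -> b \in blockQ N beta j -> (i < j)%N -> a != b.
Proof.
move=> ha hb ij; apply/eqP => e; rewrite e in ha.
by move: ij; rewrite (block_uniq ha hb) ltnn.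
Qed.

Arguments blk_neq {l N beta i j a b}.
Arguments supp_delta {F N R c d}.
Arguments normGL_supp {F N R g x}.

Lemma parabolic_normal (F : finFieldType) (l N : nat) (beta : 'I_l -> nat) (P : rel 'I_l) :
  is_composition N beta -> is_subposet (total_order l) P ->
  Parabolic F N beta \subset normGL F (UT F (fat N beta P)) ->
  normal_subposet (total_order l) P.
Proof.
move=> hc [irr tr sub] hs i j k m hjk.
have jk : (j < k)%N := sub j k hjk.
split => h.
- have [a ha] := block_ne hc i; have [c hcc] := block_ne hc j.
  have [d hd] := block_ne hc k.
  have ik : (i < k)%N := ltn_trans h jk.
  have nac := blk_neq ha hcc h; have nad := blk_neq ha hd ik.
  have hg := subsetP hs _ (@elem_parabolic F l N beta i j a c hc ha hcc h).
  have hx : supp (fat N beta P) (delta_mx c d : 'M[F]_N).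
    by apply: supp_delta; rewrite (fatE _ hcc hd).
  have H := normGL_supp hg hx.
  have [_ inv] := @elem_unit F N a c nac.
  rewrite inv in H.
  have eq : (1%:M - delta_mx a c) *m delta_mx c d *m (1%:M + delta_mx a c)
            = delta_mx c d - delta_mx a d :> 'M[F]_N.
    rewrite mulmxBl mul1mx mul_delta_mx_cond eqxx mulr1n mulmxDr mulmx1.
    rewrite mulmxBl !mul_delta_mx_cond eq_sym (negbTE nad) !mulr0n subr0 addr0.
    done.
  rewrite eq in H.
  rewrite -(fatE P ha hd); move/suppP: H; apply.
  by rewrite !mxE eqxx (negbTE nac) /= eqxx sub0r oppr_eq0 oner_eq0.
- have [c hcc] := block_ne hc j; have [d hd] := block_ne hc k.
  have [e he] := block_ne hc m.
  have jm : (j < m)%N := ltn_trans jk h.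
  have nde := blk_neq hd he h; have nce := blk_neq hcc he jm.
  have hg := subsetP hs _ (@elem_parabolic F l N beta k m d e hc hd he h).
  have hx : supp (fat N beta P) (delta_mx c d : 'M[F]_N).
    by apply: supp_delta; rewrite (fatE _ hcc hd).
  have H := normGL_supp hg hx.
  have [_ inv] := @elem_unit F N d e nde.
  rewrite inv in H.
  have eq : (1%:M - delta_mx d e) *m delta_mx c d *m (1%:M + delta_mx d e)
            = delta_mx c d + delta_mx c e :> 'M[F]_N.
    rewrite mulmxBl mul1mx mul_delta_mx_cond eq_sym (negbTE nce) mulr0n subr0.
    by rewrite mulmxDr mulmx1 mul_delta_mx_cond eqxx mulr1n.
  rewrite eq in H.
  rewrite -(fatE P hcc he); move/suppP: H; apply.
  by rewrite !mxE eqxx [e == d]eq_sym (negbTE nde) /= eqxx add0r oner_eq0.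
Qed.
Lemma Levi_sub (F : finFieldType) (l N : nat) (beta : 'I_l -> nat) :
  Levi F N beta \subset Parabolic F N beta.
Proof.
apply/subsetP => g; rewrite !inE => /andP[-> /forallP H] /=.
apply/forallP => a; apply/forallP => b; apply/implyP => nz.
move/forallP: (H a) => /(_ b)/implyP/(_ nz)/existsP[i /andP[ha hb]].
by apply/existsP; exists i; apply/existsP; exists i; rewrite ha hb leqnn.
Qed.

Theorem mainTheorem4 (F : finFieldType) (N l : nat) (beta : 'I_l -> nat)
  (P : rel 'I_l) :
  is_composition N beta ->
  is_subposet (total_order l) P ->
  (normal_subposet (total_order l) P <->
     [/\ is_subposet (Qbeta N beta) (fat N beta P),
         normal_subposet (Qbeta N beta) (fat N beta P)
       & levi_compatible F N beta (fat N beta P)]) /\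
  ([/\ is_subposet (Qbeta N beta) (fat N beta P),
       normal_subposet (Qbeta N beta) (fat N beta P)
     & levi_compatible F N beta (fat N beta P)] <->
     Parabolic F N beta \subset normGL F (UT F (fat N beta P))).
Proof.
move=> hc hP.
have hsub := @fat_subposet l N beta P hc hP.
have hfn := @fat_normal l N beta P hc.
split; split.
- move=> hn; split => //; first exact: hfn.1.
  exact: subset_trans (@Levi_sub F l N beta) (@normal_parabolic F l N beta P hc hn).
- by case=> _ hn _; apply: hfn.2.
- by case=> _ hn _; apply: (@normal_parabolic F l N beta P hc); apply: hfn.2.
- move=> hs; have hn := @parabolic_normal F l N beta P hc hP hs.
  split => //; first exact: hfn.1.
  exact: subset_trans (@Levi_sub F l N beta) hs.
Qed.
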